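(* Let $A$ be a finite left brace of odd order with cyclic additive group and Z-group multiplicative group, written as $A=\bar{A}\times\bar{B}$ as described in the context. Then $\mathrm{Soc}(A)=\mathrm{Soc}(\bar{A})\times(B_{m+1}\times\dots\times B_r\times I_1\times\dots\times I_m)$. In particular, the quotient left brace $A/\mathrm{Soc}(A)$ has cyclic multiplicative group.
   Context: A left brace is a set $A$ with $(A,+)$ abelian group, $(A,\circ)$ group, $a\circ(b+c)=a\circ b-a+a\circ c$; $\lambda_a(b):=-a+a\circ b$, and $\mathrm{Soc}(A)=\{a\mid\lambda_a=\mathrm{id}\}$, an ideal. A trivial left brace has $a\circ b=a+b$. A Z-group is a finite group with all Sylow subgroups cyclic. Decomposition: there are integers $v,m,r\ge 0$ with $m\le r$, pairwise distinct odd primes $q_1,\dots,q_v,p_1,\dots,p_r$ with $p_1<\dots<p_r$, positive integers $\gamma_i,\beta_j$, left braces $A_1,\dots,A_v$ and $B_1,\dots,B_r$ with cyclic additive groups, $|A_i|=q_i^{\gamma_i}$, $|B_j|=p_j^{\beta_j}$, $B_{m+1},\dots,B_r$ trivial, and a homomorphism $\alpha:(B_1\times\dots\times B_m,\circ)\to\mathrm{Aut}(B_{m+1}\times\dots\times B_r,+)$ whose restriction to each $B_i$ ($i\le m$) is nontrivial and whose image acts nontrivially on each $B_i$ ($i>m$), such that $A=\bar A\times\bar B$ (direct product of left braces), where $\bar A=A_1\times\dots\times A_v$ is a direct product of left braces and $\bar B=(B_{m+1}\times\dots\times B_r)\rtimes_\alpha(B_1\times\dots\times B_m)$ is the semidirect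 product of left braces: additive group the direct product, and $(x,y)\circ(x',y')=(x\circ\alpha(y)(x'),y\circ y')$. For $j\le m$, $I_j:=\mathrm{Soc}(B_j)\cap\ker\alpha$. *)

(* Defs.v *)
From HB Require Import structures.
From mathcomp Require Import all_boot all_order all_fingroup all_solvable.

Set Implicit Arguments.
Unset Strict Implicit.
Unset Printing Implicit Defensive.

Record braceOps (T : Type) := BraceOps {
  badd : T -> T -> T;
  bopp : T -> T;
  bzero : T;
  bcirc : T -> T -> T }.

Definition is_left_brace (T : Type) (o : braceOps T) : Prop :=
  (forall a b c, badd o a (badd o b c) = badd o (badd o a b) c) /\
  (forall a b, badd o a b = badd o b a) /\
  (forall a, badd o (bzero o) a = a) /\
  (forall a, badd o (bopp o a) a = bzero o) /\
  (forall a b c, bcirc o a (bcirc o b c) = bcirc o (bcirc o a b) c) /\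
  (exists e, (forall a, bcirc o e a = a /\ bcirc o a e = a) /\
             (forall a, exists b, bcirc o b a = e /\ bcirc o a b = e)) /\
  (forall a b c, bcirc o a (badd o b c)
                 = badd o (badd o (bcirc o a b) (bopp o a)) (bcirc o a c)).

Definition blambda (T : Type) (o : braceOps T) (a b : T) : T :=
  badd o (bopp o a) (bcirc o a b).

Definition socle (T : finType) (o : braceOps T) : {set T} :=
  [set a | [forall b, blambda o a b == b]].

Definition is_trivial_brace (T : Type) (o : braceOps T) : Prop :=
  forall a b, bcirc o a b = badd o a b.

Definition add_cyclic (T : Type) (o : braceOps T) : Prop :=
  exists g, forall a, exists n, a = iter n (badd o g) (bzero o).

Definition prodOps (I : finType) (T : I -> finType) (o : forall i, braceOps (T i))
  : braceOps {dffun forall i, T i} :=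
  BraceOps (fun x y : {dffun forall i, T i} =>
              (finfun (fun i => badd (o i) (x i) (y i)) : {dffun forall i, T i}))
           (fun x : {dffun forall i, T i} =>
              (finfun (fun i => bopp (o i) (x i)) : {dffun forall i, T i}))
           (finfun (fun i => bzero (o i)) : {dffun forall i, T i})
           (fun x y : {dffun forall i, T i} =>
              (finfun (fun i => bcirc (o i) (x i) (y i)) : {dffun forall i, T i})).

Definition pairOps (T1 T2 : Type) (o1 : braceOps T1) (o2 : braceOps T2)
  : braceOps (T1 * T2) :=
  BraceOps (fun u w => (badd o1 u.1 w.1, badd o2 u.2 w.2))
           (fun u => (bopp o1 u.1, bopp o2 u.2))
           (bzero o1, bzero o2)
           (fun u w => (bcirc o1 u.1 w.1, bcirc o2 u.2 w.2)).

Definition sdprodOps (N H : Type) (oN : braceOps N) (oH : braceOps H)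
  (alpha : H -> N -> N) : braceOps (N * H) :=
  BraceOps (fun u w => (badd oN u.1 w.1, badd oH u.2 w.2))
           (fun u => (bopp oN u.1, bopp oH u.2))
           (bzero oN, bzero oH)
           (fun u w => (bcirc oN u.1 (alpha u.2 w.1), bcirc oH u.2 w.2)).

Definition only_at (I : finType) (T : I -> finType) (o : forall i, braceOps (T i))
  (y : {dffun forall i, T i}) (i : I) : bool :=
  [forall k, (k != i) ==> (y k == bzero (o k))].

(* I_i = Soc(B_i) \cap ker alpha, B_i viewed inside the product of the B_k *)
Definition I_factor (I : finType) (T : I -> finType) (o : forall i, braceOps (T i))
  (NT : finType) (alpha : {dffun forall i, T i} -> NT -> NT) (i : I) : {set T i} :=
  [set b in socle (o i) |
     [forall y in [set: {dffun forall k : I, T k}],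
        ((y i == b) && only_at o y i) ==> [forall x, alpha y x == x]]].

Definition I_prod (I : finType) (T : I -> finType) (o : forall i, braceOps (T i))
  (NT : finType) (alpha : {dffun forall i, T i} -> NT -> NT) : {set {dffun forall i, T i}} :=
  [set y : {dffun forall i, T i} | [forall i, y i \in I_factor o alpha i]].

(* the prime attached to index k of B_1,...,B_r with r = m + s *)
Definition concat_fun (m s : nat) (f1 : 'I_m -> nat) (f2 : 'I_s -> nat) (k : 'I_(m + s)) : nat :=
  match split k with inl i => f1 i | inr j => f2 j end.

(* Main.v *)
Require Import Defs.
From mathcomp Require Import all_boot all_order all_fingroup all_solvable.
Set Implicit Arguments. Unset Strict Implicit. Unset Printing Implicit Defensive.

Section Brace.
Variables (T : Type) (o : braceOps T).
Hypothesis Hb : is_left_brace o.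
Local Notation "a + b" := (badd o a b).
Local Notation "a * b" := (bcirc o a b).
Local Notation "0" := (bzero o).
Local Notation "- a" := (bopp o a).

Lemma bA a b c : a + (b + c) = (a + b) + c. Proof. by case: Hb. Qed.
Lemma bC a b : a + b = b + a. Proof. by case: Hb => _ []. Qed.
Lemma b0 a : 0 + a = a. Proof. by case: Hb => _ [] _ []. Qed.
Lemma bN a : - a + a = 0. Proof. by case: Hb => _ [] _ [] _ []. Qed.
Lemma cA a b c : a * (b * c) = (a * b) * c. Proof. by case: Hb => _ [] _ [] _ [] _ []. Qed.
Lemma cdist a b c : a * (b + c) = (a * b + - a) + a * c.
Proof. by case: Hb => _ [] _ [] _ [] _ [] _ [] _. Qed.
Lemma b0r a : a + 0 = a. Proof. by rewrite bC b0. Qed.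
Lemma baddI a b c : a + b = a + c -> b = c.
Proof. by move=> h; rewrite -(b0 b) -(bN a) -bA h bA bN b0. Qed.
Lemma c0r a : a * 0 = a.
Proof.
have := cdist a 0 0; rewrite b0 -{1}(b0r (a * 0)) -bA => /baddI.
by rewrite bC => /(congr1 (fun t => t + a)); rewrite -bA bN b0r b0.
Qed.
Lemma cid : (forall a, 0 * a = a /\ a * 0 = a) /\ (forall a, exists b, b * a = 0 /\ a * b = 0).
Proof.
case: Hb => _ [] _ [] _ [] _ [] _ [] [e [He Hi]] _.
have e0 : e = 0 by rewrite -(c0r e); case: (He 0).
by rewrite -e0.
Qed.
Lemma c0l a : 0 * a = a. Proof. by case: cid => h _; case: (h a). Qed.
Lemma ccancel a b c : a * b = a * c -> b = c.
Proof.
case: cid => _ /(_ a) [a' [h1 _]] h.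
by rewrite -(c0l b) -(c0l c) -h1 -!cA h.
Qed.
Lemma lambda_iff a b : (blambda o a b = b) <-> (a * b = a + b).
Proof.
rewrite /blambda; split => h.
  by rewrite -{2}h bA (bC a (- a)) bN b0.
by rewrite h bA bN b0.
Qed.
End Brace.

Open Scope group_scope.
Lemma lagrange (T : finType) (o : braceOps T) : is_left_brace o ->
  forall a x, iter #|T| (bcirc o a) x = x.
Proof.
move=> Hb a x.
have inj b : injective (bcirc o b) by move=> u w; apply: ccancel.
pose pi b := perm (inj b).
pose P := [set pi b | b in T].
have gP : group_set P.
  apply/andP; split.
    apply/imsetP; exists (bzero o) => //; apply/permP => y.
    by rewrite perm1 permE c0l.
  apply/subsetP => _ /imset2P [_ _ /imsetP [b _ ->] /imsetP [c _ ->] ->].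
  apply/imsetP; exists (bcirc o c b) => //; apply/permP => y.
  by rewrite permM !permE cA.
have cP : #|P| = #|T|.
  rewrite card_imset //= => b c h.
  by rewrite -(c0r Hb b) -(c0r Hb c) -[bcirc o b _](permE (inj b)) -/(pi b) h permE.
have : (#[pi a] %| #|Group gP|)%g.
  by apply: order_dvdG; apply/imsetP; exists a.
rewrite /= cP order_dvdn => /eqP h.
have := congr1 (fun s : {perm T} => s x) h.
have eqi n y : iter n (pi a) y = iter n (bcirc o a) y.
  by elim: n => //= n ->; rewrite permE.
by rewrite /= perm1 permX eqi.
Qed.

Close Scope group_scope.
Lemma socleP (T : finType) (o : braceOps T) : is_left_brace o ->
  forall a, reflect (forall b, bcirc o a b = badd o a b) (a \in socle o).
Proof.
move=> Hb a; rewrite inE; apply: (iffP forallP) => h b.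
  by apply/lambda_iff => //; apply/eqP.
by apply/eqP/lambda_iff.
Qed.

Section Prod.
Variables (I : finType) (T : I -> finType) (o : forall i, braceOps (T i)).
Hypothesis Hb : forall i, is_left_brace (o i).
Local Notation P := (prodOps o).

Lemma P_c0l x : bcirc P (bzero P) x = x.
Proof. by apply/ffunP => i; rewrite /= !ffunE c0l. Qed.
Lemma P_c0r x : bcirc P x (bzero P) = x.
Proof. by apply/ffunP => i; rewrite /= !ffunE c0r. Qed.
Lemma P_b0r x : badd P x (bzero P) = x.
Proof. by apply/ffunP => i; rewrite /= !ffunE b0r. Qed.
Lemma P_b0 x : badd P (bzero P) x = x.
Proof. by apply/ffunP => i; rewrite /= !ffunE b0. Qed.
Lemma P_baddI a b c : badd P a b = badd P a c -> b = c.
Proof.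
move=> h; apply/ffunP => i; apply: (baddI (Hb i) (a := a i)).
by have := congr1 (fun z : {dffun forall k, T k} => z i) h; rewrite /= !ffunE.
Qed.
Lemma P_ccancel a b c : bcirc P a b = bcirc P a c -> b = c.
Proof.
move=> h; apply/ffunP => i; apply: (ccancel (Hb i) (a := a i)).
by have := congr1 (fun z : {dffun forall k, T k} => z i) h; rewrite /= !ffunE.
Qed.
Lemma P_socle a : (forall b, bcirc P a b = badd P a b) <-> (forall i, a i \in socle (o i)).
Proof.
split => h.
  move=> i; apply/socleP => // c.
  have := congr1 (fun z : {dffun forall k, T k} => z i) (h (finfun (dfwith (fun k => a k) c))).
  by rewrite /= !ffunE dfwith_in.
move=> b; apply/ffunP => i; rewrite /= !ffunE.
exact: (socleP (Hb i) _ (h i)).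
Qed.
Lemma P_socle' a : (a \in socle P) <-> (forall b, bcirc P a b = badd P a b).
Proof.
rewrite inE; split => h.
  move=> b; have /eqP := forallP h b; rewrite /blambda.
  move=> e; apply/ffunP => i; have := congr1 (fun z : {dffun forall k, T k} => z i) e.
  by rewrite /= !ffunE => /lambda_iff ->.
apply/forallP => b; apply/eqP/ffunP => i; rewrite /= !ffunE.
by apply/lambda_iff => //; have := congr1 (fun z : {dffun forall k, T k} => z i) (h b); rewrite /= !ffunE.
Qed.
Lemma P_socleP a : (a \in socle P) <-> (forall i, a i \in socle (o i)).
Proof. by split => h; [apply/P_socle/P_socle' | apply/P_socle'/P_socle]. Qed.
End Prod.

Lemma iter_mod (X : Type) (h : X -> X) d : (forall x, iter d h x = x) ->
  forall n x, iter n h x = iter (n %% d) h x.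
Proof.
move=> hd n x; rewrite {1}(divn_eq n d) iterD; move: (iter _ h x) => w.
by elim: (n %/ d) => //= q IH; rewrite mulSn iterD IH hd.
Qed.

Lemma iter_id (X : Type) (h : X -> X) : (forall x, h x = x) -> forall n x, iter n h x = x.
Proof. by move=> hh; elim => //= n IH x; rewrite hh IH. Qed.

Section Key.
Variables (m : nat) (TB1 : 'I_m -> finType) (oB1 : forall i, braceOps (TB1 i)).
Variables (NT : finType) (oN : braceOps NT).
Variable alpha : {dffun forall i, TB1 i} -> NT -> NT.
Variables (p1 beta1 : 'I_m -> nat).
Hypothesis Hb1 : forall i, is_left_brace (oB1 i).
Hypothesis Hcard : forall i, #|TB1 i| = p1 i ^ beta1 i.
Hypothesis Hprime : forall i, prime (p1 i).
Hypothesis Hbeta : forall i, 0 < beta1 i.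
Hypothesis Hdist : forall i k, i != k -> p1 i != p1 k.
Hypothesis Hinj : forall y, injective (alpha y).
Local Notation oH := (prodOps oB1).
Hypothesis Hhom : forall y y' x, alpha (bcirc oH y y') x = alpha y (alpha y' x).

Lemma alpha_e x : alpha (bzero oH) x = x.
Proof.
apply: (Hinj (y := bzero oH) (x1 := alpha (bzero oH) x) (x2 := x)).
by rewrite -Hhom (P_c0l Hb1).
Qed.

Lemma alpha_iter y n x : alpha (iter n (bcirc oH y) (bzero oH)) x = iter n (alpha y) x.
Proof. by elim: n => /= [|n IH]; rewrite ?alpha_e // Hhom IH. Qed.

Lemma iter_comp y n z k :
  (iter n (bcirc oH y) z) k = iter n (bcirc (oB1 k) (y k)) (z k).
Proof. by elim: n => //= n IH; rewrite ffunE IH. Qed.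

Lemma key y : (y \in socle oH /\ forall x, alpha y x = x) <-> y \in I_prod oB1 alpha.
Proof.
split.
  move=> [/(P_socleP Hb1) hs ha]; rewrite inE; apply/forallP => i; rewrite inE.
  apply/andP; split; first exact: hs.
  apply/forall_inP => z _; apply/implyP => /andP [/eqP zi hz]; apply/forallP => x.
  pose d k := p1 k ^ beta1 k.
  pose D := \prod_(k | k != i) d k.
  have cop : coprime (d i) D.
    rewrite /D; apply: (big_ind (fun t => coprime (d i) t)) => [|a b|k ki]; first exact: coprimen1.
      by rewrite coprimeMr => -> ->.
    apply/coprimeXl/coprimeXr; rewrite prime_coprime // dvdn_prime2 //.
    by apply: Hdist; rewrite eq_sym.
  pose n := chinese (d i) D 1 0.
  have -> : z = iter n (bcirc oH y) (bzero oH).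
    apply/ffunP => k; rewrite iter_comp (iter_mod (lagrange (Hb1 k) (y k))) Hcard.
    have [<-|ki] := eqVneq i k.
      rewrite (chinese_modl cop) modn_small; first by rewrite /= ffunE c0r.
      by rewrite -[X in X < _](exp1n (beta1 i)) ltn_exp2r ?prime_gt1.
    have dk : d k %| D by rewrite /D (bigD1 k) ?dvdn_mulr // eq_sym.
    rewrite -/(d k) -(modn_dvdm _ dk) (chinese_modr cop) !mod0n /=.
    have ki' : k != i by rewrite eq_sym.
    move/forallP: hz => /(_ k) /implyP /(_ ki') /eqP. by rewrite ffunE.
  by apply/eqP; rewrite alpha_iter iter_id.
rewrite inE => /forallP hI.
have hIi i : y i \in socle (oB1 i) /\ forall z : {dffun forall k, TB1 k}, ((z i == y i) && only_at oB1 z i) -> forall x, alpha z x = x.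
  have := hI i; rewrite inE => /andP [hs /forall_inP h]; split => // z hz x.
  by have := h z (in_setT _); rewrite hz => /forallP /(_ x) /eqP.
split; first by apply/(P_socleP Hb1) => i; case: (hIi i).
pose yS (S : {set 'I_m}) : {dffun forall k, TB1 k} :=
  finfun (fun k => if k \in S then y k else bzero (oB1 k)).
have single i x : alpha (yS [set i]) x = x.
  apply: (proj2 (hIi i)); rewrite ffunE set11 eqxx /=.
  apply/forallP => k; apply/implyP => ki; by rewrite ffunE in_set1 (negbTE ki).
have gen n : forall S : {set 'I_m}, #|S| = n -> forall x, alpha (yS S) x = x.
  elim: n => [|n IH] S hS x.
    have -> : yS S = bzero oH.
      by apply/ffunP => k; rewrite !ffunE (cards0_eq hS) in_set0.
    exact: alpha_e.
  have /set0Pn [i iS] : S != set0 by rewrite -card_gt0 hS.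
  have -> : yS S = bcirc oH (yS [set i]) (yS (S :\ i)).
    apply/ffunP => k; rewrite /= !ffunE in_setD1 in_set1.
    case: (eqVneq k i) => [->|ki] /=; first by rewrite iS c0r.
    by rewrite c0l.
  rewrite Hhom single; apply: IH.
  by have := cardsD1 i S; rewrite iS hS /= add1n => -[] ->.
move=> x; have -> : y = yS setT by apply/ffunP => k; rewrite ffunE in_setT.
exact: gen.
Qed.
End Key.

Open Scope group_scope.
Lemma emb_abelian (gT : finGroupType) (T : finType) (o : braceOps T) p k (phi : T -> gT) :
  Zgroup [set: gT] -> is_left_brace o -> prime p -> #|T| = (p ^ k)%N -> injective phi ->
  (forall a b, phi (bcirc o a b) = phi a * phi b) -> forall a b, bcirc o a b = bcirc o b a.
Proof.
move=> hZ Hb pp hc inj hm.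
have phi1 : phi (bzero o) = 1.
  by apply/(mulgI (phi (bzero o))); rewrite mulg1 -hm c0l.
pose P := [set phi a | a in T].
have gP : group_set P.
  apply/andP; split; first by apply/imsetP; exists (bzero o).
  apply/subsetP => _ /imset2P [_ _ /imsetP [a _ ->] /imsetP [b _ ->] ->].
  by apply/imsetP; exists (bcirc o a b) => //; rewrite hm.
have zP : Zgroup (Group gP) by apply: ZgroupS (subsetT _) hZ.
have pgP : p.-group (Group gP) by rewrite /pgroup /= card_imset // hc pnatX pnat_id.
have /centsP ab := cyclic_abelian (nil_Zgroup_cyclic zP (pgroup_nil pgP)).
move=> a b; apply: inj; rewrite !hm; apply: ab; apply/imsetP; by [exists a | exists b].
Qed.
Close Scope group_scope.

Theorem mainTheorem9
  (gT : finGroupType) (add : gT -> gT -> gT) (opp : gT -> gT) (zero : gT)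
  (v m s : nat)
  (q gamma : 'I_v -> nat) (p1 beta1 : 'I_m -> nat) (p2 beta2 : 'I_s -> nat)
  (TA : 'I_v -> finType) (oA : forall i, braceOps (TA i))
  (TB1 : 'I_m -> finType) (oB1 : forall i, braceOps (TB1 i))
  (TB2 : 'I_s -> finType) (oB2 : forall j, braceOps (TB2 j))
  (alpha : {dffun forall i, TB1 i} -> {dffun forall j, TB2 j} -> {dffun forall j, TB2 j})
  (f : gT -> {dffun forall i, TA i} * ({dffun forall j, TB2 j} * {dffun forall i, TB1 i})) :
  let oG := BraceOps add opp zero (fun a b : gT => (a * b)%g) in
  let oH := prodOps oB1 in
  let oN := prodOps oB2 in
  let oAbar := prodOps oA in
  let oBbar := sdprodOps oN oH alpha in
  let oTot := pairOps oAbar oBbar in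
  let pr := concat_fun p1 p2 in
  (* A: finite left brace of odd order, cyclic additive group, Z-group (A,o) *)
  is_left_brace oG -> odd #|gT| -> add_cyclic oG -> Zgroup [set: gT] ->
  (* the primes *)
  (forall i, prime (q i) && odd (q i)) ->
  (forall k, prime (pr k) && odd (pr k)) ->
  injective q -> (forall i k, q i != pr k) ->
  (forall k l : 'I_(m + s), k < l -> pr k < pr l) ->
  (forall i, 0 < gamma i) -> (forall k, 0 < concat_fun beta1 beta2 k) ->
  (* the factors *)
  (forall i, [/\ is_left_brace (oA i), add_cyclic (oA i) & #|TA i| = q i ^ gamma i]) ->
  (forall i, [/\ is_left_brace (oB1 i), add_cyclic (oB1 i) & #|TB1 i| = p1 i ^ beta1 i]) ->
  (forall j, [/\ is_left_brace (oB2 j), add_cyclic (oB2 j), #|TB2 j| = p2 j ^ beta2 j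
                & is_trivial_brace (oB2 j)]) ->
  (* alpha : (B_1 x ... x B_m, o) -> Aut(B_(m+1) x ... x B_r, +) homomorphism *)
  (forall y, bijective (alpha y) /\
             forall x x', alpha y (badd oN x x') = badd oN (alpha y x) (alpha y x')) ->
  (forall y y' x, alpha (bcirc oH y y') x = alpha y (alpha y' x)) ->
  (* restriction of alpha to each B_i (i <= m) is nontrivial *)
  (forall i, exists y, only_at oB1 y i /\ exists x, alpha y x != x) ->
  (* the image of alpha acts nontrivially on each B_j (j > m) *)
  (forall j, exists y x, only_at oB2 x j /\ alpha y x != x) ->
  (* A = Abar x Bbar *)
  bijective f ->
  (forall a b, f (add a b) = badd oTot (f a) (f b)) ->
  (forall a b, f (a * b)%g = bcirc oTot (f a) (f b)) ->
  f @: socle oG = setX (socle oAbar) (setX [set: {dffun forall j, TB2 j}] (I_prod oB1 alpha))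
  /\ cyclic ([set: gT] / socle oG).
Proof.
move=> oG oH oN oAbar oBbar oTot pr HbG Hodd Hcyc HZ Hq Hpr Hqinj Hqp Hmono Hgam Hbeta
  HA HB1 HB2 Halpha Hhom Hnt1 Hnt2 [g fK gK] Hfadd Hfmul.
have HbA i : is_left_brace (oA i) by case: (HA i).
have HbB1 i : is_left_brace (oB1 i) by case: (HB1 i).
have HbB2 j : is_left_brace (oB2 j) by case: (HB2 j).
have cB1 i : #|TB1 i| = p1 i ^ beta1 i by case: (HB1 i).
have cardA i : #|TA i| = q i ^ gamma i by case: (HA i).
have trN x y : bcirc oN x y = badd oN x y.
  by apply/ffunP => j; rewrite /= !ffunE; case: (HB2 j).
have alpha0 y : alpha y (bzero oN) = bzero oN.
  have h := (proj2 (Halpha y)) (bzero oN) (bzero oN).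
  rewrite P_b0 // in h; apply: (P_baddI HbB2 (a := alpha y (bzero oN))).
  by rewrite -h P_b0r.
have alphainj y : injective (alpha y).
  by case: (proj1 (Halpha y)) => h hK _; apply: can_inj hK.
have spl i : split (lshift s i) = inl i := unsplitK (inl i).
have Hp1 i : prime (p1 i).
  by have := Hpr (lshift s i); rewrite /pr /concat_fun spl => /andP [].
have Hb1 i : 0 < beta1 i.
  by have := Hbeta (lshift s i); rewrite /concat_fun spl.
have Hdist i k : i != k -> p1 i != p1 k.
  move=> ik; case: (ltngtP i k) => h.
  - have := Hmono (lshift s i) (lshift s k) h.
    by rewrite /pr /concat_fun !spl => /ltn_eqF ->.
  - have := Hmono (lshift s k) (lshift s i) h.
    by rewrite /pr /concat_fun !spl eq_sym => /ltn_eqF ->.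
  - by move: ik; rewrite (val_inj h) eqxx.
have KEY := key HbB1 cB1 Hp1 Hb1 Hdist alphainj Hhom.
have finj : injective f := can_inj fK.
have ghom z z' : g (bcirc oTot z z') = (g z * g z')%g.
  by apply: finj; rewrite Hfmul !gK.
have socG a : a \in socle oG <-> forall z, bcirc oTot (f a) z = badd oTot (f a) z.
  split.
    move=> /(socleP HbG) h z; rewrite -(gK z) -Hfmul -Hfadd; congr f; exact: h.
  move=> h; apply/(socleP HbG) => b; apply: finj; rewrite Hfmul Hfadd; exact: h.
have part1 : f @: socle oG = setX (socle oAbar) (setX [set: {dffun forall j, TB2 j}] (I_prod oB1 alpha)).
  apply/setP => z; rewrite -{1}(gK z) (mem_imset _ _ finj).
  have eq := socG (g z); rewrite gK in eq.
  case: z eq => u [w y] eq; rewrite !in_setX in_setT /=.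
  apply/idP/andP.
    move=> /eq h; split.
      apply/(P_socle' HbA) => u'.
      by move: (h (u', (bzero oN, bzero oH))) => /= [e1 _ _].
    apply/KEY; split.
      apply/(P_socle' HbB1) => y'.
      by move: (h (bzero oAbar, (bzero oN, y'))) => /= [_ _ e3].
    move=> x.
    have e2 : bcirc oN w (alpha y x) = badd oN w x :=
      congr1 (fun t => t.2.1) (h (bzero oAbar, (x, bzero oH))).
    by rewrite trN in e2; apply: (P_baddI HbB2 e2).
  move=> [hu /KEY [hy ha]]; apply/eq => -[u' [w' y']].
  change ((bcirc oAbar u u', (bcirc oN w (alpha y w'), bcirc oH y y')) =
          (badd oAbar u u', (badd oN w w', badd oH y y'))).
  rewrite trN ha; congr (_, (_, _)).
    exact: (proj1 (P_socle' HbA _) hu).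
  exact: (proj1 (P_socle' HbB1 _) hy).
split; first exact: part1.
have z1 : zero = 1%g by rewrite -(mulg1 zero); exact: (c0l HbG 1%g).
have gS : group_set (socle oG).
  apply/andP; split.
    apply/(socleP HbG) => b; rewrite -z1 (b0 HbG); exact: (c0l HbG).
  apply/subsetP => _ /imset2P [a b /(socleP HbG) ha /(socleP HbG) hb ->].
  apply/(socleP HbG) => x.
  have e : bcirc oG (bcirc oG a b) x = badd oG (bcirc oG a b) x.
    rewrite -(cA HbG) hb (cdist HbG) ha ha -(bA HbG (badd oG a b)).
    by rewrite (bA HbG (bopp oG a)) (bN HbG) (b0 HbG).
  exact: e.
change (cyclic ([set: gT]%G / Group gS)).
apply: nil_Zgroup_cyclic.
  exact: morphim_Zgroup.
apply: abelian_nil; apply: sub_der1_abelian.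
have abA u w : bcirc oAbar u w = bcirc oAbar w u.
  apply/ffunP => i; rewrite /= !ffunE.
  pose e (a : TA i) : {dffun forall k, TA k} := finfun (dfwith (fun k => bzero (oA k)) a).
  pose phi (a : TA i) := g (e a, (bzero oN, bzero oH)).
  apply: (emb_abelian (phi := phi) HZ (HbA i) _ (cardA i)).
  - by case/andP: (Hq i).
  - move=> a b /(can_inj gK) [] /(congr1 (fun t : {dffun forall k, TA k} => t i)).
    by rewrite !ffunE !dfwith_in.
  - move=> a b; rewrite -ghom; congr g.
    change ((e (bcirc (oA i) a b), (bzero oN, bzero oH)) =
      (bcirc oAbar (e a) (e b),
       (bcirc oN (bzero oN) (alpha (bzero oH) (bzero oN)), bcirc oH (bzero oH) (bzero oH)))).
    rewrite alpha0 !P_c0l //; congr (_, _); apply/ffunP => k; rewrite /= !ffunE.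
    by case: (eqVneq i k) => [<-|ik]; rewrite ?dfwith_in ?dfwith_out // c0l.
have abH u w : bcirc oH u w = bcirc oH w u.
  apply/ffunP => i; rewrite /= !ffunE.
  pose e (a : TB1 i) : {dffun forall k, TB1 k} := finfun (dfwith (fun k => bzero (oB1 k)) a).
  pose phi (a : TB1 i) := g (bzero oAbar, (bzero oN, e a)).
  apply: (emb_abelian (phi := phi) HZ (HbB1 i) _ (cB1 i)).
  - exact: Hp1.
  - move=> a b /(can_inj gK) [] /(congr1 (fun t : {dffun forall k, TB1 k} => t i)).
    by rewrite !ffunE !dfwith_in.
  - move=> a b; rewrite -ghom; congr g.
    change ((bzero oAbar, (bzero oN, e (bcirc (oB1 i) a b))) =
      (bcirc oAbar (bzero oAbar) (bzero oAbar),
       (bcirc oN (bzero oN) (alpha (e a) (bzero oN)), bcirc oH (e a) (e b)))).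
    rewrite alpha0 !P_c0l //; congr (_, (_, _)); apply/ffunP => k; rewrite /= !ffunE.
    by case: (eqVneq i k) => [<-|ik]; rewrite ?dfwith_in ?dfwith_out // c0l.
rewrite derg1 gen_subG; apply/subsetP => _ /imset2P [a b _ _ ->].
change ([~ a, b]%g \in socle oG).
rewrite -(mem_imset _ _ finj) part1.
have := commgC a b; move: [~ a, b]%g => c e.
have {}e := congr1 f e; rewrite !Hfmul in e.
have e1 : bcirc oAbar (f a).1 (f b).1 = bcirc oAbar (bcirc oAbar (f b).1 (f a).1) (f c).1
  := congr1 fst e.
have e3 : bcirc oH (f a).2.2 (f b).2.2 = bcirc oH (bcirc oH (f b).2.2 (f a).2.2) (f c).2.2
  := congr1 (fun t => t.2.2) e.
rewrite abA -{1}(P_c0r HbA (bcirc oAbar _ _)) in e1.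
rewrite abH -{1}(P_c0r HbB1 (bcirc oH _ _)) in e3.
move: (P_ccancel HbA e1) (P_ccancel HbB1 e3).
case: (f c) => u [w y] /= <- <-.
rewrite !in_setX in_setT /=; apply/andP; split.
  by apply/(P_socle' HbA) => x; rewrite P_c0l // P_b0.
apply/KEY; split; last exact: (alpha_e HbB1 alphainj Hhom).
by apply/(P_socle' HbB1) => x; rewrite P_c0l // P_b0.
Qed.
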